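(* Assume $q_*(y)>0$ if and only if $\mathrm{numK}(y)=0$, and let $T>0$. For every $t\in[0,T)$, every $y\in\mathcal{Y}$, every coordinate $i$ with $y_i=K$ and every $k\in\{1,\dots,K-1\}$, $$\frac{q^\gets_t(y[i\to k])}{q^\gets_t(y)}\le \frac{1}{e^{T-t}-1},$$ where $y[i\to k]$ denotes $y$ with its $i$-th coordinate replaced by $k$.
   Context: Fix integers $K\ge2$, $d\ge1$, $\mathcal{Y}=\{1,\dots,K\}^d$; the symbol $K$ is the mask token and $\mathrm{numK}(y)=\#\{i:y_i=K\}$. The masked forward process is the continuous-time Markov chain on $\mathcal{Y}$ started at $q_*$ in which each non-mask coordinate independently turns into $K$ at rate $1$ and $K$ is absorbing; i.e. with rate function $R^\to(y,y')=1$ if $y,y'$ differ in exactly one coordinate $i$ with $y_i=K$, $R^\to(y,y)=-(d-\mathrm{numK}(y))$, and $0$ otherwise. Its marginals are $q^\to_t$, and $q^\gets_t:=q^\to_{T-t}$. *)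

(* Defs.v *)
From HB Require Import structures.
From mathcomp Require Import all_boot all_order all_algebra.
From mathcomp Require Import all_classical all_reals all_analysis.
Set Implicit Arguments. Unset Strict Implicit. Unset Printing Implicit Defensive.
Import Order.TTheory GRing.Theory Num.Theory.
Import numFieldNormedType.Exports.
Local Open Scope classical_set_scope.
Local Open Scope ring_scope.

(* State space Y = {1,...,K}^d, encoded as functions 'I_d -> 'I_K;
   the value v : 'I_K encodes the symbol v+1, so the mask token K is the
   ordinal with value K-1. *)
Definition state (d K : nat) := {ffun 'I_d -> 'I_K}.

Definition isMask (K : nat) (v : 'I_K) : bool := val v == K.-1.

Definition numK (d K : nat) (y : state d K) : nat := #|[set i | isMask (y i)]|.

Definition replace (d K : nat) (y : state d K) (i : 'I_d) (k : 'I_K) : state d K :=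
  [ffun j => if j == i then k else y j].

(* Rate function R^->(x, x') of the masked forward CTMC (rate of jumping
   from x to x'): 1 if x, x' differ in exactly one coordinate i and x'_i = K
   (a non-mask coordinate turns into the mask), -(d - numK x) on the
   diagonal, 0 otherwise. *)
Definition Rfwd (R : realType) (d K : nat) (x x' : state d K) : R :=
  if x == x' then - ((d - numK x)%:R)
  else if (#|[set i | x i != x' i]| == 1%N) &&
          [exists i, (x i != x' i) && isMask (x' i)] then 1 else 0.

Definition forward_marginals (R : realType) (d K : nat)
    (qstar : state d K -> R) (q : R -> state d K -> R) : Prop :=
  (forall y, q 0 y = qstar y) /\
  (forall y : state d K, (fun t : R => q t y) @ (0 : R)^'+ --> q 0 y) /\
  (forall t : R, 0 < t -> forall y : state d K,
      is_derive t (1 : R) (fun s : R => q s y) (\sum_(x : state d K) q t x * Rfwd R x y)).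

Definition is_distribution (R : realType) (d K : nat) (qstar : state d K -> R) : Prop :=
  (forall y, 0 <= qstar y) /\ \sum_(y : state d K) qstar y = 1.

(* Main.v *)
Require Import Defs.
From HB Require Import structures.
From mathcomp Require Import all_boot all_order all_algebra.
From mathcomp Require Import all_classical all_reals all_analysis.
From mathcomp Require Import ring lra zify.
Import Order.TTheory GRing.Theory Num.Theory.

Module CombM.
Local Open Scope ring_scope.

Lemma cardC (T : finType) (P : pred T) : #|[set i | P i]%classic| = #|[set i | P i]|.
Proof. apply: eq_card => j; rewrite !inE /=; apply/idP/idP; rewrite in_setE //=. Qed.

Section Comb.
Context {R : realType} {d K : nat}.
Implicit Types x y z w : state d K.

Lemma mask_uniq (a b : 'I_K) : isMask a -> isMask b -> a = b.
Proof. by rewrite /isMask => /eqP ha /eqP hb; apply: val_inj; rewrite /= ha hb. Qed.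

Lemma numKE x : numK x = #|[set j | isMask (x j)]|.
Proof. by rewrite /numK cardC. Qed.

Lemma numK_le x : (numK x <= d)%N.
Proof. by rewrite numKE; apply: leq_trans (max_card _) _; rewrite card_ord. Qed.

Lemma Rfwd_diag x : Rfwd R x x = - ((d - numK x)%:R).
Proof. by rewrite /Rfwd eqxx. Qed.

Lemma Rfwd_ge0 x y : 0 <= Rfwd R x y \/ x = y.
Proof.
rewrite /Rfwd; case: eqP => [->|_]; [by right|left].
by case: ifP.
Qed.

Lemma Rfwd_lt x y : x != y -> Rfwd R x y != 0 -> (numK x < numK y)%N.
Proof.
rewrite /Rfwd cardC => /negbTE ->; case: ifP; last by rewrite eqxx.
move=> /andP[/cards1P[a Da] /existsP[i0 /andP[xyi0 myi0]]] _.
have i0D : i0 \in [set j | x j != y j] by rewrite inE.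
rewrite Da inE in i0D; move/eqP: i0D => i0a.
rewrite !numKE; apply: proper_card; apply/properP; split.
  apply/fintype.subsetP => j; rewrite !inE => mxj.
  have [ji0|ji0] := eqVneq j i0.
    subst j; exfalso; move/negP: xyi0; apply; apply/eqP; exact: mask_uniq.
  have : j \notin [set j | x j != y j] by rewrite Da inE -i0a.
  by rewrite inE negbK => /eqP <-.
exists i0; first by rewrite inE.
rewrite inE; apply/negP => mx; move/negP: xyi0; apply; apply/eqP; exact: mask_uniq.
Qed.

Variables (mk : 'I_K) (hmk : isMask mk) (i : 'I_d).
Definition phi x := replace x i mk.

Lemma phiE x j : phi x j = if j == i then mk else x j.
Proof. by rewrite /phi /replace ffunE. Qed.

Lemma phi_mask x : isMask (phi x i).
Proof. by rewrite phiE eqxx. Qed.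

Lemma Rfwd_F3 z y : isMask (y i) -> ~~ isMask (z i) -> Rfwd R z y = (phi z == y)%:R.
Proof.
move=> my nz.
have zy : z != y by apply/negP => /eqP zy; move: nz; rewrite zy my.
have yi : y i = mk by exact: mask_uniq.
rewrite /Rfwd cardC (negbTE zy).
have -> : (#|[set j | z j != y j]| == 1%N) && [exists j, (z j != y j) && isMask (y j)]
          = (phi z == y).
  apply/idP/idP.
    move=> /andP[/cards1P[a Da] _].
    have iD : i \in [set j | z j != y j].
      by rewrite inE; apply/negP => /eqP e; move: nz; rewrite e my.
    rewrite Da inE in iD; move/eqP: iD => ia.
    apply/eqP/ffunP => j; rewrite phiE; case: eqP => [->//|/eqP ji].
    have : j \notin [set j | z j != y j] by rewrite Da inE -ia.
    by rewrite inE negbK => /eqP.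
  move=> /eqP pz; apply/andP; split.
    apply/cards1P; exists i; apply/setP => j; rewrite !inE.
    have [->|ji] := eqVneq j i.
      by rewrite ?eqxx ?andbT; apply/negP => /eqP e; move: nz; rewrite e my.
    by rewrite -pz phiE (negbTE ji) eqxx.
  apply/existsP; exists i; rewrite my andbT.
  by apply/negP => /eqP e; move: nz; rewrite e my.
by case: (phi z == y).
Qed.

Lemma numK_phi z : ~~ isMask (z i) -> numK (phi z) = (numK z).+1.
Proof.
move=> nz; rewrite !numKE.
have -> : [set j | isMask (phi z j)] = i |: [set j | isMask (z j)].
  apply/setP => j; rewrite !inE phiE; case: eqP => [->|]; by rewrite ?hmk.
by rewrite cardsU1 inE nz.
Qed.

Lemma Rfwd_F4 x z : ~~ isMask (z i) ->
  Rfwd R x z = (x i == z i)%:R * (Rfwd R (phi x) (phi z) - (x == z)%:R).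
Proof.
move=> nz.
have [->|xz] := eqVneq x z.
  rewrite eqxx mul1r !Rfwd_diag numK_phi //.
  have := numK_le (phi z); rewrite numK_phi // => hle.
  have -> : (d - numK z = (d - (numK z).+1).+1)%N by lia.
  by rewrite -addn1 natrD opprD.
have [exi|nxi] := eqVneq (x i) (z i); last first.
  rewrite mul0r /Rfwd cardC (negbTE xz); case: ifP => //.
  move=> /andP[/cards1P[a Da] /existsP[i0 /andP[xyi0 myi0]]].
  have i0D : i0 \in [set j | x j != z j] by rewrite inE.
  have iD : i \in [set j | x j != z j] by rewrite inE.
  rewrite Da inE in i0D; rewrite Da inE in iD.
  by move: myi0; rewrite (eqP i0D) -(eqP iD) (negbTE nz).
rewrite mul1r subr0.
have pxz : phi x != phi z.
  apply/negP => /eqP e; move/negP: xz; apply; apply/eqP/ffunP => j.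
  have [->//|ji] := eqVneq j i.
  by have := congr1 (fun f : state d K => f j) e; rewrite /= !phiE (negbTE ji).
rewrite /Rfwd !cardC (negbTE xz) (negbTE pxz).
have -> : [set j | x j != z j] = [set j | phi x j != phi z j].
  apply/setP => j; rewrite !inE !phiE; have [->|//] := eqVneq j i.
  by rewrite exi !eqxx.
have -> : [exists j, (x j != z j) && isMask (z j)] =
          [exists j, (phi x j != phi z j) && isMask (phi z j)].
  apply/eq_existsb => j; rewrite !phiE; have [->|//] := eqVneq j i.
  by rewrite exi !eqxx.
by [].
Qed.


Definition Pm (q : state d K -> R) w := \sum_(z : state d K | (phi z == w) && ~~ isMask (z i)) q z.

Lemma sumA (q : state d K -> R) w : isMask (w i) ->
  \sum_x q x * Rfwd R x w = \sum_(v : state d K | isMask (v i)) q v * Rfwd R v w + Pm q w.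
Proof.
move=> mw; rewrite (bigID (fun x : state d K => isMask (x i))) /=; congr (_ + _).
rewrite /Pm big_mkcond [RHS]big_mkcond /=; apply: eq_bigr => z _.
case nz: (isMask (z i)); first by rewrite andbF.
rewrite Rfwd_F3 ?nz // andbT; case: (phi z == w); by rewrite ?mulr1 ?mulr0.
Qed.

Lemma phi_replace w (a : 'I_K) : isMask (w i) -> phi (replace w i a) = w.
Proof.
move=> mw; apply/ffunP => j; rewrite phiE /replace ffunE.
by case: eqP => [->|//]; apply/esym/mask_uniq.
Qed.

Lemma count_lem w x : isMask (w i) ->
  \sum_(z : state d K | (phi z == w) && ~~ isMask (z i)) ((x i == z i)%:R : R) = (~~ isMask (x i))%:R.
Proof.
move=> mw; case nx: (isMask (x i)) => /=.
  apply: big1 => z /andP[_ nz]; case: eqP => // e; by move: nz; rewrite -e nx.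
set r := replace w i (x i).
have ri : r i = x i by rewrite /r /replace ffunE eqxx.
rewrite (bigD1 r) /=; last by rewrite phi_replace // eqxx ri nx.
rewrite ri eqxx big1 ?addr0 // => z /andP[/andP[/eqP pz nz] zr].
case: eqP => // e; exfalso; move/negP: zr; apply; apply/eqP/ffunP => j.
rewrite /r /replace ffunE; have [->//|ji] := eqVneq j i.
by rewrite -pz phiE (negbTE ji).
Qed.

Lemma sumB (q : state d K -> R) w : isMask (w i) ->
  \sum_(z : state d K | (phi z == w) && ~~ isMask (z i)) \sum_x q x * Rfwd R x z =
  \sum_(v : state d K | isMask (v i)) Pm q v * Rfwd R v w - Pm q w.
Proof.
move=> mw.
have E1 : forall z, (phi z == w) && ~~ isMask (z i) ->
    \sum_x q x * Rfwd R x z =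
    \sum_x q x * Rfwd R (phi x) w * (x i == z i)%:R - q z.
  move=> z /andP[/eqP pz nz].
  under eq_bigr => x _ do rewrite Rfwd_F4 // pz.
  rewrite (bigD1 z) //= (bigD1 z (P := predT)) //= eqxx mul1r.
  have -> : \sum_(x | x != z) q x * ((x i == z i)%:R * (Rfwd R (phi x) w - (x == z)%:R))
       = \sum_(x | x != z) q x * Rfwd R (phi x) w * (x i == z i)%:R.
    by apply: eq_bigr => x xz; rewrite (negbTE xz) subr0; ring.
  by rewrite [phi z]pz eqxx /=; ring.
rewrite (eq_bigr _ E1) sumrB; congr (_ - _).
rewrite exchange_big /=.
transitivity (\sum_x q x * Rfwd R (phi x) w * (~~ isMask (x i))%:R).
  by apply: eq_bigr => x _; rewrite -mulr_sumr count_lem.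
rewrite /Pm.
under [RHS]eq_bigr => v _ do rewrite mulr_suml.
rewrite [RHS]big_mkcond /= [RHS](eq_bigr (fun v : state d K => \sum_x
    (if isMask (v i) && (phi x == v) && ~~ isMask (x i) then q x * Rfwd R (phi x) w else 0))).
  rewrite exchange_big /=; apply: eq_bigr => x _.
  rewrite (bigD1 (phi x)) //= big1 ?addr0.
    by rewrite phi_mask eqxx /=; case: (isMask (x i)); rewrite ?mulr0 ?mulr1.
  by move=> v vx; rewrite eq_sym (negbTE vx) andbF.
move=> v _; case mv: (isMask (v i)) => /=; last by rewrite big1.
rewrite big_mkcond /=; apply: eq_bigr => x _.
by case: eqP => [<-|] //=.
Qed.

End Comb.

End CombM.
Import CombM.

Module KeyM.
Import numFieldNormedType.Exports.
Local Open Scope classical_set_scope.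
Local Open Scope ring_scope.

Section K.
Context {R : realType}.

Lemma is_derive_expMx (a t : R) : is_derive t 1 (fun s => expR (a * s)) (expR (a * t) * a).
Proof.
have h1 : is_derive t 1 (fun s : R => a * s) a.
  apply: (is_derive_eq (@is_deriveZ R R R id a t 1 1 (is_derive_id t 1))).
  by rewrite /GRing.scale /= mulr1.
exact: (@is_derive1_comp R expR (fun s => a * s) t _ _ (is_derive_expR _) h1).
Qed.

Lemma key (c l : R) (g dg p : R -> R) :
  (forall t : R, 0 < t -> is_derive t 1 g (dg t)) ->
  (forall t : R, 0 < t -> dg t = c * g t + p t) ->
  (forall t : R, 0 < t -> 0 <= p t) ->
  g x @[x --> 0^'+] --> l -> 0 <= l -> forall t : R, 0 < t -> 0 <= g t.
Proof.
move=> Hd Hdg Hp Hl l0 t t0.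
pose f (s : R) := expR (- c * s) * g s.
have df : forall s : R, 0 < s -> is_derive s 1 f (expR (- c * s) * p s).
  move=> s s0; apply: is_derive_eq.
    exact: (@is_deriveM R R (fun s => expR (- c * s)) g s 1 _ _ (is_derive_expMx _ _) (Hd s s0)).
  rewrite Hdg //= /GRing.scale /=; lra.
have fmono : forall u : R, 0 < u -> u < t -> f u <= f t.
  move=> u u0 ut.
  have [] := @MVT R f (fun s => expR (- c * s) * p s) u t ut.
  - move=> x; rewrite in_itv /= => /andP[ux _]; apply: df; exact: lt_trans u0 ux.
  - apply: continuous_in_subspaceT => x; rewrite inE /= in_itv /= => /andP[ux _].
    have x0 : 0 < x by exact: lt_le_trans u0 ux.
    have H := df x x0; apply: differentiable_continuous; apply/derivable1_diffP.
    exact: ex_derive.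
  move=> x; rewrite in_itv /= => /andP[ux _] /eqP; rewrite subr_eq => /eqP ->.
  rewrite lerDr; apply: mulr_ge0; last by rewrite subr_ge0 ltW.
  apply: mulr_ge0; first exact: expR_ge0.
  apply: Hp; exact: lt_trans u0 ux.
have fl : f x @[x --> 0^'+] --> l.
  have e1 : expR (- c * x) @[x --> 0^'+] --> (1 : R).
    have -> : (1 : R) = expR (- c * 0) by rewrite mulr0 expR0.
    apply: cvg_at_right_filter.
    have H := is_derive_expMx (- c) 0.
    have D : differentiable (fun s : R => expR (- c * s)) 0.
      by apply/derivable1_diffP; exact: ex_derive.
    exact: (differentiable_continuous D).
  rewrite -[l]mul1r; exact: cvgM e1 Hl.
have lft : l <= f t.
  apply: (cvgr_to_le fl); near=> x; apply: fmono.
    by near: x; exact: nbhs_right_gt.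
  by near: x; exact: nbhs_right_lt.
have : 0 <= f t by exact: le_trans l0 lft.
rewrite /f pmulr_rge0 //; exact: expR_gt0.
Unshelve. all: by end_near.
Qed.
End K.

End KeyM.
Import KeyM.

Module MainM.
Import numFieldNormedType.Exports.
Local Open Scope classical_set_scope.
Local Open Scope ring_scope.

Lemma is_derive_bigsum {R : realType} (I : finType) (P : pred I) (h : I -> R -> R)
  (dh : I -> R) (t : R) : (forall j, is_derive t 1 (h j) (dh j)) ->
  is_derive t 1 (fun s => \sum_(j | P j) h j s) (\sum_(j | P j) dh j).
Proof.
move=> H.
have -> : (fun s => \sum_(j | P j) h j s) = \sum_(j | P j) h j.
  by apply/funext => s; rewrite fct_sumE.
elim/big_ind2: _ => //.
  exact: is_derive_cst.
by move=> f1 d1 f2 d2 H1 H2; exact: is_deriveD.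
Qed.

Section Main.
Context {R : realType} {d K : nat}.
Variables (q : R -> state d K -> R).
Hypothesis hD : forall t : R, 0 < t -> forall y : state d K,
  is_derive t 1 (fun s : R => q s y) (\sum_(x : state d K) q t x * Rfwd R x y).
Hypothesis hL : forall y : state d K, (fun t : R => q t y) @ (0 : R)^'+ --> q 0 y.

Lemma q_nonneg : (forall y, 0 <= q 0 y) ->
  forall n y, (numK y < n)%N -> forall t : R, 0 < t -> 0 <= q t y.
Proof.
move=> h0; elim=> [//|n IH] y hy t t0.
apply: (@key R (Rfwd R y y) (q 0 y) (fun s => q s y)
   (fun s => \sum_(x : state d K) q s x * Rfwd R x y)
   (fun s => \sum_(x : state d K | x != y) q s x * Rfwd R x y)) => //.
- by move=> s s0; exact: hD.
- by move=> s s0; rewrite (bigD1 y) //= mulrC.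
- move=> s s0; apply: sumr_ge0 => x xy.
  have [hx|e] := Rfwd_ge0 (R := R) x y; last by rewrite e eqxx in xy.
  have [->|nz] := eqVneq (Rfwd R x y) 0; first by rewrite mulr0.
  apply: mulr_ge0 => //; apply: IH => //.
  have := @Rfwd_lt R d K x y xy nz; lia.
Qed.

Variables (mk : 'I_K) (hmk : isMask mk) (i : 'I_d).
Definition hh (t : R) (w : state d K) := q t w - (expR t - 1) * Pm mk i (q t) w.

Lemma hh_derive (t : R) : 0 < t -> forall w : state d K, isMask (w i) ->
  is_derive t 1 (fun s => hh s w)
    (Rfwd R w w * hh t w + \sum_(v : state d K | isMask (v i) && (v != w)) hh t v * Rfwd R v w).
Proof.
move=> t0 w mw.
have dP : is_derive t 1 (fun s => Pm mk i (q s) w)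
   (\sum_(z : state d K | (phi mk i z == w) && ~~ isMask (z i)) \sum_x q t x * Rfwd R x z).
  by apply: is_derive_bigsum => z; exact: hD.
have dE : is_derive t 1 (fun s : R => expR s - 1) (expR t).
  have dE0 := is_deriveB (is_derive_expR t) (@is_derive_cst R R R (1:R) t (1:R)).
  have -> : (fun s : R => expR s - 1) = expR - cst (1:R) by apply/funext.
  by apply: (is_derive_eq dE0); rewrite subr0.
have dM := is_deriveM dE dP.
have dH := is_deriveB (@hD t t0 w) dM.
have -> : (fun s => hh s w) = (fun s => q s w) -
   ((fun s : R => expR s - 1) * (fun s => Pm mk i (q s) w)).
  by apply/funext => s.
apply: (is_derive_eq dH).
rewrite (@sumA R d K mk hmk i) // (@sumB R d K mk hmk i) //= /GRing.scale /=.
have -> : \sum_(v : state d K | isMask (v i) && (v != w)) hh t v * Rfwd R v w =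
   \sum_(v : state d K | isMask (v i)) hh t v * Rfwd R v w - hh t w * Rfwd R w w.
  by rewrite [X in _ = X - _](bigD1 w) //= addrAC subrr add0r.
rewrite /hh.
have -> : \sum_(v : state d K | isMask (v i)) (q t v - (expR t - 1) * Pm mk i (q t) v) * Rfwd R v w
   = \sum_(v : state d K | isMask (v i)) q t v * Rfwd R v w
     - (expR t - 1) * \sum_(v : state d K | isMask (v i)) Pm mk i (q t) v * Rfwd R v w.
  by rewrite mulr_sumr -sumrB; apply: eq_bigr => v _; ring.
ring.
Qed.

Lemma hh_lim (w : state d K) : (fun s => hh s w) @ (0 : R)^'+ --> q 0 w.
Proof.
have c1 := hL w.
have c2 : (fun s : R => expR s - 1) @ (0 : R)^'+ --> (0 : R).
  have := cvgB (cvg_at_right_filter (@continuous_expR R 0)) (cvg_cst (1 : R)).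
  by move=> /(_ _ _) H; have := H _ _; rewrite expR0 subrr; apply.

have c3 : (fun s => Pm mk i (q s) w) @ (0 : R)^'+ --> Pm mk i (q 0) w.
  rewrite /Pm; apply: (cvg_big add_continuous) => // z _; exact: hL.
have := cvgB c1 (cvgM c2 c3); rewrite mul0r subr0; exact.
Qed.

Lemma hh_zero : (forall w : state d K, isMask (w i) -> q 0 w = 0) ->
  forall n (w : state d K), isMask (w i) -> (numK w < n)%N ->
  forall t : R, 0 < t -> hh t w = 0.
Proof.
move=> h0; elim=> [//|n IH] w mw hw t t0.
have p0 : forall s : R, 0 < s ->
    \sum_(v : state d K | isMask (v i) && (v != w)) hh s v * Rfwd R v w = 0.
  move=> s s0; apply: big1 => v /andP[mv vw].
  have [->|nz] := eqVneq (Rfwd R v w) 0; first by rewrite mulr0.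
  rewrite (IH v mv) ?mul0r //; have := @Rfwd_lt R d K v w vw nz; lia.
have l0 := hh_lim w; rewrite h0 // in l0.
apply/eqP; rewrite eq_le; apply/andP; split; last first.
  apply: (@key R (Rfwd R w w) 0 (fun s => hh s w) (fun s => (Rfwd R w w * hh s w +
     \sum_(v : state d K | isMask (v i) && (v != w)) hh s v * Rfwd R v w)) (fun _ => 0)) => //.
  - move=> s s0; exact: hh_derive.
  - by move=> s s0 /=; rewrite p0 // addr0.
have := @key R (Rfwd R w w) 0 (fun s => - hh s w)
  (fun s => - (Rfwd R w w * hh s w +
     \sum_(v : state d K | isMask (v i) && (v != w)) hh s v * Rfwd R v w)) (fun _ => 0).
move=> H; have := H _ _ _ _ _ t t0; rewrite oppr_ge0; apply => //; clear H.
- move=> s s0.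
  have -> : (fun s => - hh s w) = - (fun s => hh s w) by apply/funext.
  apply: is_deriveN; exact: hh_derive.
- by move=> s s0 /=; rewrite p0 // addr0 mulrN addr0.
- by have := cvgN l0; rewrite oppr0; apply.
Qed.
End Main.

End MainM.
Import MainM.

Local Open Scope ring_scope.

Theorem mainTheorem4 (R : realType) (K d : nat) (hK : (2 <= K)%N) (hd : (1 <= d)%N)
    (qstar : state d K -> R) (q : R -> state d K -> R)
    (hdist : is_distribution qstar)
    (hsupp : forall y, 0 < qstar y <-> numK y = 0%N)
    (hfwd : forward_marginals qstar q)
    (T : R) (hT : 0 < T) :
  forall (t : R), 0 <= t -> t < T ->
  forall (y : state d K) (i : 'I_d) (k : 'I_K),
    isMask (y i) -> ~~ isMask k ->
    q (T - t) (replace y i k) / q (T - t) y <= (expR (T - t) - 1)^-1.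
Proof.
move=> t t0 tT y i k my nk.
have s0 : 0 < T - t by rewrite subr_gt0.
move: (T - t) s0 => s s0.
case: hfwd => h0 [hL hD].
case: hdist => hge _.
have q0nn : forall w, 0 <= q 0 w by move=> w; rewrite h0.
have mz : forall w : state d K, isMask (w i) -> q 0 w = 0.
  move=> w mw; rewrite h0; apply/eqP; rewrite eq_le hge andbT leNgt; apply/negP.
  move/hsupp => /eqP; rewrite numKE (cardD1 i) inE mw //.
have qnn : forall u : R, 0 < u -> forall w, 0 <= q u w.
  move=> u u0 w; exact: (@q_nonneg R d K q hD hL q0nn _ w (ltnSn (numK w)) u u0).
have hz := @hh_zero R d K q hD hL (y i) my i mz _ y my (ltnSn (numK y)) s s0.
rewrite /hh in hz.
have e1 : 0 < expR s - 1 by rewrite subr_gt0 expR_gt1.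
set z := replace y i k.
have le : q s z <= Pm (y i) i (q s) y.
  rewrite /Pm (bigD1 z) /=; last first.
    by rewrite (phi_replace _ my) // eqxx /z /replace ffunE eqxx nk.
  by rewrite lerDl; apply: sumr_ge0 => x _; exact: qnn.
have qy : q s y = (expR s - 1) * Pm (y i) i (q s) y by apply/eqP; rewrite -subr_eq0 hz.
have [q0|qpos] := eqVneq (q s y) 0.
  by rewrite q0 invr0 mulr0 invr_ge0 ltW.
have qpos' : 0 < q s y by rewrite lt0r qpos qnn.
rewrite ler_pdivrMr // qy mulrA mulVf ?mul1r //; exact: lt0r_neq0.
Qed.
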